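(* Let $A\in\mathbb{R}^{n\times n}$. Then for $k>1$, $$A_\star^k=A_\star^{k-1}-\mathcal{U}\big(A\,\mathcal{U}(A^TA_\star^{k-1})\big),\qquad A_\star^1=I_n-\mathcal{U}\big(A\,\mathcal{U}(A^T)\big),$$ and for all $1\le j\le n$ and $k>1$, $$(A_\star^k)_{1:j,j}=(I_j-A|_{j\times j}A|_{j\times j}^T)(A_\star^{k-1})_{1:j,j}.$$ Moreover, let $M\in\mathbb{R}^{n\times n}$ and $\alpha>0$ be such that $\max_{1\le j\le n}\|I_j-\alpha M|_{j\times j}M|_{j\times j}^T\|_{S_\infty}<1$, and set $A:=\sqrt{\alpha}M$. Then $M$ has an $LU$-factorization $M=LU$ with $L$ unit lower triangular and $U$ upper triangular, and $$U^{-1}=\alpha\,\mathcal{U}\Big(M^T\Big(I_n+\sum_{m=1}^\infty A_\star^m\Big)\Big).$$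
   Context: $I_j$ is the $j\times j$ identity; $M|_{j\times j}$ denotes the upper left $j\times j$ submatrix of $M$; $M_{i:j,k:l}$ denotes the submatrix with rows $i..j$ and columns $k..l$. $\mathcal{U}(M)_{ij}:=M_{ij}$ for $i\le j$, $0$ for $i>j$. For $A\in\mathbb{R}^{n\times n}$ and $k\in\mathbb{N}$, $A_\star^k\in\mathbb{R}^{n\times n}$ is defined by $(A_\star^k)_{ij}:=\big((I_j-A|_{j\times j}A|_{j\times j}^T)^k\big)_{ij}$ for $i\le j$ and $(A_\star^k)_{ij}:=0$ for $i>j$. $\|\cdot\|_{S_\infty}$ is the spectral norm. *)

(* Defs.v *)
From HB Require Import structures.
From mathcomp Require Import all_boot all_order all_algebra.
From mathcomp Require Import all_classical all_reals all_analysis.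
Set Implicit Arguments. Unset Strict Implicit. Unset Printing Implicit Defensive.
Import Order.TTheory GRing.Theory Num.Theory.
Local Open Scope ring_scope.
Local Open Scope classical_set_scope.

Section Defs.
Variable R : realType.

Definition upper n (M : 'M[R]_n) : 'M[R]_n :=
  \matrix_(i, j) (if (i <= j)%N then M i j else 0).

(* Leading principal (j+1)x(j+1) submatrix, for a 0-based index j : 'I_n
   (= the paper's M|_{j x j} with 1-based j). *)
Definition lsub n (M : 'M[R]_n) (j : 'I_n) : 'M[R]_(j.+1) :=
  \matrix_(a, b) M (widen_ord (ltn_ord j) a) (widen_ord (ltn_ord j) b).

(* Column j, rows 0..j (= paper's M_{1:j,j}). *)
Definition colpart n (M : 'M[R]_n) (j : 'I_n) : 'cV[R]_(j.+1) :=
  \col_a M (widen_ord (ltn_ord j) a) j.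

Definition Astar n (A : 'M[R]_n) (k : nat) : 'M[R]_n :=
  \matrix_(i, j) (if (i <= j)%N then
     ((1%:M - lsub A j *m (lsub A j)^T) ^+ k) (inord i) ord_max
   else 0).

Definition vnorm2 p (x : 'cV[R]_p) : R := Num.sqrt (\sum_i (x i 0) ^+ 2).

Definition specnorm p (B : 'M[R]_p) : R :=
  sup [set vnorm2 (B *m x) | x in [set x : 'cV[R]_p | vnorm2 x <= 1]].

End Defs.

(* Main.v *)
Require Import Defs.
From HB Require Import structures.
From mathcomp Require Import all_boot all_order all_algebra.
From mathcomp Require Import all_classical all_reals all_analysis.
From mathcomp Require Import ring.
Import Order.TTheory GRing.Theory Num.Theory.
Local Open Scope ring_scope.
Import numFieldNormedType.Exports.
Local Open Scope classical_set_scope.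

Section H.
Variable R : realType.
Set Implicit Arguments. Unset Strict Implicit.

Lemma sum_lej {n} (j : 'I_n) (F : 'I_n -> R) :
  \sum_(l < n) (if (l <= j)%N then F l else 0) =
  \sum_(l < j.+1) F (widen_ord (ltn_ord j) l).
Proof.
rewrite -big_mkcond /=.
rewrite -(@big_ord_narrow_cond _ _ _ j.+1 n (fun _ => true) F (ltn_ord j)) /=.
by apply: eq_bigl => l; rewrite ltnS.
Qed.

Lemma widen_inord n (j : 'I_n) (i : 'I_n) : (i <= j)%N ->
  widen_ord (ltn_ord j) (inord i : 'I_j.+1) = i.
Proof. by move=> h; apply: val_inj => /=; rewrite inordK. Qed.

Lemma inord_widen n (j : 'I_n) (a : 'I_j.+1) :
  (inord (widen_ord (ltn_ord j) a) : 'I_j.+1) = a.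
Proof. by apply: val_inj => /=; rewrite inordK. Qed.

Definition Bm {n} (A : 'M[R]_n) (j : 'I_n) : 'M[R]_j.+1 :=
  1%:M - lsub A j *m (lsub A j)^T.

Lemma AstarE n (A : 'M[R]_n) k i j :
  Astar A k i j = if (i <= j)%N then (Bm A j ^+ k) (inord i) ord_max else 0.
Proof. by rewrite mxE. Qed.

Lemma colpart_Astar n (A : 'M[R]_n) k j :
  colpart (Astar A k) j = \col_a (Bm A j ^+ k) a ord_max.
Proof.
apply/matrixP => a b; rewrite !mxE /= -ltnS ltn_ord inord_widen.
by [].

Qed.

Lemma Astar0 n (A : 'M[R]_n) : Astar A 0 = 1%:M.
Proof.
apply/matrixP => i j; rewrite AstarE expr0 [RHS]mxE.
case: leqP => h.
  rewrite mxE; congr (_%:R).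
  by rewrite -[i == j]val_eqE -val_eqE /= inordK ?ltnS.
by case: eqP => // e; move: h; rewrite e ltnn.
Qed.

Lemma upper_key n (A Y : 'M[R]_n) (i j : 'I_n) : (i <= j)%N ->
  (forall m : 'I_n, (j < m)%N -> Y m j = 0) ->
  (A *m upper (A^T *m Y)) i j =
  ((lsub A j *m (lsub A j)^T) *m colpart Y j) (inord i) 0.
Proof.
move=> hij hY.
rewrite !mxE.
under eq_bigr do rewrite !mxE.
rewrite (eq_bigr (fun l : 'I_n => if (l <= j)%N then
    A i l * \sum_(m < n) (if (m <= j)%N then A m l * Y m j else 0) else 0)); last first.
  move=> l _; case: ifP; rewrite ?mulr0 // => _; congr (_ * _).
  apply: eq_bigr => m _; rewrite mxE; case: leqP => // h; by rewrite hY ?mulr0.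
rewrite (sum_lej j (fun l => A i l * \sum_(m < n) (if (m <= j)%N then A m l * Y m j else 0))).
under eq_bigr => a _ do rewrite (sum_lej j (fun m => A m _ * Y m j)) big_distrr /=.
rewrite exchange_big /=; apply: eq_bigr => b _.
rewrite !mxE big_distrl /=; apply: eq_bigr => a _.
by rewrite !mxE widen_inord // mulrA.
Qed.

Lemma colmul p (G P : 'M[R]_p) x c :
  (G *m \col_a P a c) x 0 = (G *m P) x c.
Proof. by rewrite !mxE; apply: eq_bigr => b _; rewrite mxE. Qed.

Lemma BmS n (A : 'M[R]_n) j k :
  Bm A j ^+ k.+1 = Bm A j ^+ k - (lsub A j *m (lsub A j)^T) *m Bm A j ^+ k.
Proof.
by rewrite exprS -mulmxE /Bm mulmxBl mul1mx.
Qed.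

Lemma Astar_succ n (A : 'M[R]_n) k :
  Astar A k.+1 = Astar A k - upper (A *m upper (A^T *m Astar A k)).
Proof.
apply/matrixP => i j; rewrite [in RHS]mxE [X in _ + X]mxE.
rewrite [X in _ - X]mxE !AstarE.
case: leqP => h; last by rewrite subr0.
rewrite upper_key //; last by move=> m hm; rewrite AstarE leqNgt hm.
rewrite colpart_Astar colmul BmS [LHS]mxE; congr (_ + _).
by rewrite [LHS]mxE.
Qed.

Lemma part3 n (A : 'M[R]_n) j k :
  colpart (Astar A k.+1) j = Bm A j *m colpart (Astar A k) j.
Proof.
rewrite !colpart_Astar; apply/matrixP => a b.
by rewrite (ord1 b) colmul mxE exprS mulmxE.
Qed.

Lemma vnorm2_ge0 p (x : 'cV[R]_p) : 0 <= vnorm2 x.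
Proof. exact: sqrtr_ge0. Qed.

Lemma vnorm2Z p c (x : 'cV[R]_p) : vnorm2 (c *: x) = `|c| * vnorm2 x.
Proof.
rewrite /vnorm2 -sqrtr_sqr -sqrtrM ?sqr_ge0 //; congr Num.sqrt.
rewrite big_distrr /=; apply: eq_bigr => i _; by rewrite mxE exprMn.
Qed.

Lemma vnorm2_eq0 p (x : 'cV[R]_p) : vnorm2 x = 0 -> x = 0.
Proof.
move/eqP; rewrite sqrtr_eq0 => h.
have h0 : \sum_i (x i 0) ^+ 2 = 0.
  by apply/eqP; rewrite eq_le h sumr_ge0 // => i _; rewrite sqr_ge0.
apply/matrixP => i k; rewrite (ord1 k) mxE.
have := @psumr_eq0P _ _ xpredT (fun i => x i 0 ^+ 2) (fun i _ => sqr_ge0 (x i 0)) h0 i isT.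
by move/eqP; rewrite sqrf_eq0 => /eqP.
Qed.

Lemma vnorm2_0 p : vnorm2 (0 : 'cV[R]_p) = 0.
Proof. by rewrite /vnorm2 big1 ?sqrtr0 // => i _; rewrite mxE expr0n. Qed.

Lemma entry_le p (x : 'cV[R]_p) i : `|x i 0| <= vnorm2 x.
Proof.
rewrite -sqrtr_sqr /vnorm2 ler_wsqrtr // (bigD1 i) //= lerDl.
by rewrite sumr_ge0 // => l _; rewrite sqr_ge0.
Qed.

Lemma vnorm2_bound p (y : 'cV[R]_p) (k : 'I_p -> R) :
  (forall i, `|y i 0| <= k i) -> vnorm2 y <= Num.sqrt (\sum_i (k i) ^+ 2).
Proof.
move=> h; apply: ler_wsqrtr; apply: ler_sum => i _.
rewrite -real_normK ?num_real //; apply: lerXn2r => //; rewrite ?nnegrE //.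
exact: le_trans (h i).
Qed.

Lemma spec_hasub p (B : 'M[R]_p) :
  has_ubound [set vnorm2 (B *m x) | x in [set x : 'cV[R]_p | vnorm2 x <= 1]].
Proof.
exists (Num.sqrt (\sum_i (\sum_l `|B i l|) ^+ 2)) => _ [x hx <-].
apply: vnorm2_bound => i; rewrite mxE.
rewrite (le_trans (ler_norm_sum _ _ _)) //.
apply: ler_sum => l _.
rewrite normrM -[leRHS]mulr1 ler_wpM2l //.
have hx1 : vnorm2 x <= 1 by exact: hx.
exact: (le_trans (entry_le x l) hx1).
Qed.

Lemma spec_ge0 p (B : 'M[R]_p) : 0 <= specnorm B.
Proof.
have hE : [set vnorm2 (B *m x) | x in [set x : 'cV[R]_p | vnorm2 x <= 1]] 0.
  exists 0; first by rewrite /= vnorm2_0.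
  by rewrite mulmx0 vnorm2_0.
rewrite /specnorm; exact: ub_le_sup (spec_hasub B) _ hE.
Qed.

Lemma spec_bound p (B : 'M[R]_p) x : vnorm2 (B *m x) <= specnorm B * vnorm2 x.
Proof.
have [x0|xn0] := eqVneq (vnorm2 x) 0.
  by rewrite (vnorm2_eq0 x0) mulmx0 vnorm2_0 mulr0.
have xp : 0 < vnorm2 x by rewrite lt_def xn0 vnorm2_ge0.
have hE : [set vnorm2 (B *m x) | x in [set x : 'cV[R]_p | vnorm2 x <= 1]]
   (vnorm2 (B *m ((vnorm2 x)^-1 *: x))).
  exists ((vnorm2 x)^-1 *: x) => //=.
  by rewrite vnorm2Z ger0_norm ?invr_ge0 ?vnorm2_ge0 // mulVf.
have := ub_le_sup (spec_hasub B) hE.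
rewrite -scalemxAr vnorm2Z ger0_norm ?invr_ge0 ?vnorm2_ge0 //.
by rewrite ler_pdivrMl //= mulrC.
Qed.

Lemma spec_pow p (B : 'M[R]_p.+1) x k :
  vnorm2 (B ^+ k *m x) <= specnorm B ^+ k * vnorm2 x.
Proof.
elim: k => [|k IH]; first by rewrite expr0 mul1mx mul1r.
rewrite exprS -mulmxE -mulmxA exprS -mulrA.
apply: le_trans (spec_bound _ _) _.
by rewrite ler_wpM2l // spec_ge0.
Qed.

Lemma geom_cvg0 (u : nat -> R) (K c : R) : 0 <= c -> c < 1 ->
  (forall N, `|u N| <= K * c ^+ N) -> u @ \oo --> 0.
Proof.
move=> c0 c1 h.
have w0 : (fun N => K * c ^+ N) @ \oo --> 0.
  rewrite -(mulr0 K); apply: cvgMr; apply: cvg_expr; by rewrite ger0_norm.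
apply: (@squeeze_cvgr _ _ _ _ (fun N => - (K * c ^+ N)) (fun N => K * c ^+ N)).
- by apply: nearW => N; rewrite -ler_norml.
- by rewrite -oppr0; apply: cvgN.
- exact: w0.
Qed.

Lemma inord_eq_max n (i j : 'I_n) : (i <= j)%N ->
  ((inord i : 'I_j.+1) == ord_max) = (i == j).
Proof. by move=> h; rewrite -[i == j]val_eqE -val_eqE /= inordK ?ltnS. Qed.

Lemma lsubZ n (c : R) (M : 'M[R]_n) j : lsub (c *: M) j = c *: lsub M j.
Proof. by apply/matrixP => a b; rewrite !mxE. Qed.

Lemma BmZ n (M : 'M[R]_n) alpha j : 0 <= alpha ->
  Bm (Num.sqrt alpha *: M) j = 1%:M - alpha *: (lsub M j *m (lsub M j)^T).
Proof.
move=> ha; rewrite /Bm lsubZ.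
have -> : (Num.sqrt alpha *: lsub M j)^T = Num.sqrt alpha *: (lsub M j)^T.
  by apply/matrixP => a b; rewrite !mxE.
by rewrite -scalemxAl -scalemxAr scalerA -expr2 sqr_sqrtr.
Qed.

Lemma lsub_unit n (M : 'M[R]_n) alpha j :
  specnorm (1%:M - alpha *: (lsub M j *m (lsub M j)^T)) < 1 ->
  lsub M j \in unitmx.
Proof.
move=> hc; apply/negPn/negP => nu.
have : \det (lsub M j) == 0 by move: nu; rewrite unitmxE unitfE negbK.
case/det0P => v vn0 hv.
set x := v^T.
have hx : (1%:M - alpha *: (lsub M j *m (lsub M j)^T)) *m x = x.
  rewrite mulmxBl mul1mx -scalemxAl -mulmxA /x -trmx_mul hv trmx0 mulmx0.
  by rewrite scaler0 subr0.
have xn : vnorm2 x != 0.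
  apply/eqP => /vnorm2_eq0 x0; move/eqP: vn0; apply.
  by rewrite -[v]trmxK -/x x0 trmx0.
have xp : 0 < vnorm2 x by rewrite lt_def xn vnorm2_ge0.
have := spec_bound (1%:M - alpha *: (lsub M j *m (lsub M j)^T)) x.
rewrite hx ler_pMl //; apply/negP; rewrite -ltNge; exact: hc.
Qed.

Lemma tele p (B : 'M[R]_p.+1) N :
  (1 - B) * \sum_(m < N) B ^+ m.+1 = B - B ^+ N.+1.
Proof.
elim: N => [|N IH]; first by rewrite big_ord0 mulr0 expr1 subrr.
by rewrite big_ord_recr /= mulrDr IH mulrBl mul1r -exprS addrA subrK.
Qed.

Lemma series_cvg p (G : 'M[R]_p.+1) (x y : 'I_p.+1) :
  G \in unitmx -> specnorm (1%:M - G) < 1 ->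
  (fun N => (\sum_(m < N) (1%:M - G) ^+ m.+1) x y) @ \oo -->
     (invmx G *m (1%:M - G)) x y.
Proof.
move=> Gu hc.
set B := 1%:M - G.
have hG : 1 - B = G by rewrite /B opprB addrCA subrr addr0.
have eP : forall N, \sum_(m < N) B ^+ m.+1 = invmx G *m (B - B ^+ N.+1).
  by move=> N; rewrite -[LHS](mulKmx Gu) -tele hG mulmxE.
have c0 : 0 <= specnorm B by exact: spec_ge0.
have -> : (fun N => (\sum_(m < N) B ^+ m.+1) x y) =
   (fun N => (invmx G *m B) x y - (invmx G *m B ^+ N.+1) x y).
  apply: funext => N; rewrite eP; move: (invmx G) => W.
  by rewrite mulmxBr [LHS]mxE [X in _ + X = _]mxE.
move: (invmx G) => W.
rewrite -[X in _ --> X]subr0; apply: cvgB; first exact: cvg_cst.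
set c := specnorm B.
apply: (@geom_cvg0 _ ((\sum_l `|W x l|) * vnorm2 (delta_mx y 0 : 'cV[R]_p.+1) * c) c) => // N.
rewrite mxE; apply: le_trans; first exact: ler_norm_sum.
apply: (@le_trans _ _ (\sum_l `|W x l| * (c ^+ N.+1 * vnorm2 (delta_mx y 0 : 'cV[R]_p.+1)))).
  apply: ler_sum => l _; rewrite normrM ler_wpM2l //.
  have -> : (B ^+ N.+1) l y = (B ^+ N.+1 *m (delta_mx y 0 : 'cV[R]_p.+1)) l 0.
    by rewrite -colE [col _ _ _ _]mxE.
  exact: le_trans (entry_le _ _) (spec_pow _ _ _).
by rewrite -big_distrl /= exprS le_eqVlt; apply/orP; left; apply/eqP; ring.
Qed.
End H.
Unset Implicit Arguments. Set Strict Implicit.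

Theorem mainTheorem6 (R : realType) (n : nat) :
  (forall (A : 'M[R]_n) (k : nat), (1 < k)%N ->
      Astar A k = Astar A k.-1 - upper (A *m upper (A^T *m Astar A k.-1)))
  /\ (forall A : 'M[R]_n, Astar A 1 = 1%:M - upper (A *m upper A^T))
  /\ (forall (A : 'M[R]_n) (j : 'I_n) (k : nat), (1 < k)%N ->
      colpart (Astar A k) j =
        (1%:M - lsub A j *m (lsub A j)^T) *m colpart (Astar A k.-1) j)
  /\ (forall (M : 'M[R]_n) (alpha : R), 0 < alpha ->
      (forall j : 'I_n,
         specnorm (1%:M - alpha *: (lsub M j *m (lsub M j)^T)) < 1) ->
      let A := Num.sqrt alpha *: M in
      exists (L U : 'M[R]_n),
        [/\ (forall i j : 'I_n, (i < j)%N -> L i j = 0),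
            (forall i : 'I_n, L i i = 1),
            (forall i j : 'I_n, (j < i)%N -> U i j = 0),
            M = L *m U &
            U \in unitmx /\
            exists S : 'M[R]_n,
              (forall i j : 'I_n,
                 (fun N : nat => (\sum_(m < N) Astar A m.+1 i j : R)) @ \oo --> (S i j : R)) /\
              invmx U = alpha *: upper (M^T *m (1%:M + S))]).
Proof.
split.
  by move=> A [|[|k]] // _; rewrite Astar_succ.
split.
  by move=> A; rewrite Astar_succ Astar0 mulmx1.
split.
  by move=> A j [|[|k]] // _; rewrite part3.
move=> M alpha ha hn A.
have hU : forall j, lsub M j \in unitmx by move=> j; exact: lsub_unit (hn j).
have hBm : forall j, Bm A j = 1%:M - alpha *: (lsub M j *m (lsub M j)^T).
  by move=> j; rewrite /A BmZ // ltW.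
have hGu : forall j, alpha *: (lsub M j *m (lsub M j)^T) \in unitmx.
  move=> j; rewrite unitmxZ ?unitfE ?gt_eqF // unitmx_mul unitmx_tr.
  by rewrite hU.
pose V : 'M[R]_n := \matrix_(i, j) (if (i <= j)%N then invmx (lsub M j) (inord i) ord_max else 0).
pose L := M *m V.
have hL : forall i j : 'I_n, (i <= j)%N -> L i j = (i == j)%:R.
  move=> i j hij; rewrite /L mxE.
  rewrite (eq_bigr (fun l : 'I_n => if (l <= j)%N then M i l * invmx (lsub M j) (inord l) ord_max else 0)); last first.
    by move=> l _; rewrite mxE; case: ifP; rewrite ?mulr0.
  rewrite (sum_lej j (fun l => M i l * invmx (lsub M j) (inord l) ord_max)).
  have e1 : ((inord i : 'I_j.+1) == ord_max)%:R = (1%:M : 'M[R]_j.+1) (inord i) ord_max by rewrite mxE.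
  have e2 : (lsub M j *m invmx (lsub M j)) (inord i) ord_max = \sum_a lsub M j (inord i) a * invmx (lsub M j) a ord_max.
    by move: (invmx (lsub M j)) => W; rewrite mxE.
  rewrite -(inord_eq_max hij) e1 -(mulmxV (hU j)) e2.
  by apply: eq_bigr => a _; rewrite inord_widen [lsub _ _ _ _]mxE widen_inord.
have Vunit : V \in unitmx.
  have dL : \det L = 1.
    rewrite det_trig; last first.
      by apply/is_trig_mxP => i j hij; rewrite (hL _ _ (ltnW hij)) -val_eqE (ltn_eqF hij).
    by rewrite big1 // => i _; rewrite (hL _ _ (leqnn _)) eqxx.
  rewrite unitmxE unitfE; apply/eqP => d0.
  by move: dL; rewrite /L det_mulmx d0 mulr0 => /eqP; rewrite eq_sym oner_eq0.
have Vdiag : forall i, V i i != 0.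
  move=> i.
  have : \det V^T != 0 by rewrite det_tr -unitfE -unitmxE.
  rewrite det_trig; last first.
    by apply/is_trig_mxP => a b hab; rewrite !mxE leqNgt hab.
  by move/prodf_neq0 => /(_ i isT); rewrite mxE.
have Vtri : forall i j : 'I_n, (j < i)%N -> V i j = 0.
  by move=> i j h; rewrite mxE leqNgt h.
pose U := invmx V.
have VU : V *m U = 1%:M by rewrite mulmxV.
have Uup : forall i j : 'I_n, (j < i)%N -> U i j = 0.
  move=> i j hji.
  suff H : forall d (i : 'I_n), (n <= i + d)%N -> (j < i)%N -> U i j = 0.
    exact: (H n i (leq_addl _ _) hji).
  elim => [|d IH] i' hn' hji'.
    by move: hn'; rewrite addn0 leqNgt ltn_ord.
  have := congr1 (fun X : 'M[R]_n => X i' j) VU; rewrite /= mxE [RHS]mxE -val_eqE (gtn_eqF hji').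
  rewrite (bigD1 i') //= big1 ?addr0.
    by move/eqP; rewrite mulf_eq0 (negPf (Vdiag i')) /= => /eqP.
  move=> l hl; case: (ltngtP l i') => hli.
  - by rewrite Vtri // mul0r.
  - by rewrite (IH l) ?mulr0 //; [apply: leq_trans hn' _; rewrite addnS -addSn leq_add2r | exact: ltn_trans hli].
  - by move: hl; rewrite (val_inj hli) eqxx.
pose S : 'M[R]_n := \matrix_(i, j) (if (i <= j)%N then
   (invmx (alpha *: (lsub M j *m (lsub M j)^T)) *m Bm A j) (inord i) ord_max else 0).
exists L, U; split.
- by move=> i j hij; rewrite (hL _ _ (ltnW hij)) -val_eqE (ltn_eqF hij).
- by move=> i; rewrite (hL _ _ (leqnn _)) eqxx.
- exact: Uup.
- by rewrite /L /U mulmxK.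
split; first by rewrite unitmx_inv.
exists S; split.
  move=> i j; case: (leqP i j) => hij.
    have -> : (fun N => \sum_(m < N) Astar A m.+1 i j) =
        (fun N => (\sum_(m < N) Bm A j ^+ m.+1) (inord i) ord_max).
      by apply: funext => N; rewrite summxE; apply: eq_bigr => m _; rewrite AstarE hij.
    rewrite [S i j]mxE hij hBm.
    apply: series_cvg; first exact: hGu.
    exact: hn.
  have -> : (fun N => \sum_(m < N) Astar A m.+1 i j) = (fun _ => 0).
    by apply: funext => N; rewrite big1 // => m _; rewrite AstarE leqNgt hij.
  rewrite [S i j]mxE leqNgt hij; exact: cvg_cst.
rewrite /U invmxK; apply/matrixP => i j.
rewrite [RHS]mxE [upper _ i j]mxE [V i j]mxE.
case: (leqP i j) => hij; last by rewrite mulr0.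
have eW : invmx (lsub M j) = alpha *: ((lsub M j)^T *m invmx (alpha *: (lsub M j *m (lsub M j)^T))).
  rewrite -[RHS](mulKmx (hU j)) -scalemxAr mulmxA scalemxAl mulmxV ?hGu //.
  by rewrite mulmx1.
rewrite eW [LHS]mxE; congr (alpha * _).
rewrite [RHS]mxE.
rewrite (eq_bigr (fun l : 'I_n => if (l <= j)%N then M l i * invmx (alpha *: (lsub M j *m (lsub M j)^T)) (inord l) ord_max else 0)); last first.
  move=> l _; rewrite [M^T i l]mxE [(1%:M + S) l j]mxE [S l j]mxE [1%:M l j]mxE.
  case: (leqP l j) => hl.
    rewrite hBm mulmxBr mulmx1 (mulVmx (hGu j)).
    move: (invmx _) => W0.
    rewrite [(W0 - _) _ _]mxE [X in _ + (_ + X)]mxE [1%:M _ _]mxE (inord_eq_max hl).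
    by rewrite addrC subrK.
  by rewrite -val_eqE (gtn_eqF hl) addr0 mulr0.
rewrite (sum_lej j (fun l => M l i * invmx (alpha *: (lsub M j *m (lsub M j)^T)) (inord l) ord_max)).
move: (invmx _) => W0.
rewrite [LHS]mxE; apply: eq_bigr => a _.
by rewrite inord_widen !mxE widen_inord.
Qed.
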